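(* Let $\mathbb{F}$ be an algebraically closed field of characteristic $2$. Let $(V,[\cdot,\cdot]_{V},\alpha_{V},B_{V})$ be an involutive quadratic Hom-Lie algebra over $\mathbb{F}$, let $\mathscr{D}\in\mathrm{Der}_{\alpha_{V}}(V)$ be such that $B_{V}$ is $\mathscr{D}$-invariant, and let $L=\mathbb{F}e^{*}\oplus V\oplus\mathbb{F}e$ (a vector space with two new basis vectors $e^*,e$). (1) Suppose there exist $x_{0}\in V$ and $\lambda\in\mathbb{F}$ such that $\lambda\mathscr{D}+\mathrm{ad}_{V}(x_{0})=\mathscr{D}$, $\alpha_{V}(\mathscr{D}(x_{0}))=\mathscr{D}(x_{0})$, and $\alpha_{V}\circ\mathscr{D}^{2}+\mathscr{D}^{2}\circ\alpha_{V}=\mathrm{ad}_{V}(\mathscr{D}(x_{0}))$, where $\mathrm{ad}_V(x)=[x,\cdot]_V$. Let $\lambda_0\in\mathbb{F}$ and $\beta\in\mathbb{F}$ be arbitrary. Define the bilinear alternating bracket on $L$ by $[x,y]=[x,y]_{V}+B_{V}(\mathscr{D}(x),y)e$, $[e^{*},x]=[x,e^*]=\mathscr{D}(x)$ for $x,y\in V$, $[e^*,e^*]=0$, and $[e,z]=[z,e]=0$ for all $z\in L$; define the linear map $\alpha:L\to L$ by $\alpha(x)=\alpha_{V}(x)+B_{V}(x_{0},x)e$ for $x\in V$, $\alpha(e^{*})=\lambda e^{*}+x_{0}+\lambda_{0}e$, $\alpha(e)=\lambda e$; and define the symmetric bilinear form $B$ on $L$ by $B(x,y)=B_{V}(x,y)$,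 $B(x,e^{*})=B(x,e)=0$ for $x,y\in V$, $B(e^{*},e)=1$, $B(e,e)=0$, $B(e^*,e^* )=\beta$. Then $(L,[\cdot,\cdot],\alpha,B)$ is a multiplicative quadratic Hom-Lie algebra. (2) The map $\alpha$ is invertible if and only if $\lambda\neq0$. Moreover, $\alpha$ is an involution if and only if $\lambda^{2}=1$, $\alpha_{V}(x_{0})=\lambda x_{0}$ and $B_{V}(x_{0},x_{0})=0$.
   Context: A Hom-Lie algebra $(\mathfrak g,[\cdot,\cdot],\alpha)$ over $\mathbb{F}$ (characteristic 2) is a vector space $\mathfrak g$ with a linear map $\alpha$ and a bilinear bracket satisfying $[x,x]=0$, the Hom-Jacobi identity $[\alpha(x),[y,z]]+[\alpha(y),[z,x]]+[\alpha(z),[x,y]]=0$, and $\alpha([x,y])=[\alpha(x),\alpha(y)]$ (multiplicativity) for all $x,y,z$. It is involutive if $\alpha^2=\mathrm{id}$. A quadratic Hom-Lie algebra $(\mathfrak g,[\cdot,\cdot],\alpha,B)$ is a Hom-Lie algebra with a symmetric nondegenerate bilinear form $B$ satisfying $B([x,y],z)=B(x,[y,z])$ and $B(\alpha(x),y)=B(x,\alpha(y))$ for all $x,y,z$. An $\alpha_V$-derivation of $(V,[\cdot,\cdot]_V,\alpha_V)$ is a linear map $\mathscr{D}:V\to V$ with $\mathscr{D}\circ\alpha_V=\alpha_V\circ\mathscr{D}$ and $\mathscr{D}([x,y]_V)=[\mathscr{D}(x),\alpha_V(y)]_V+[\alpha_V(x),\mathscr{D}(y)]_V$; $\mathrm{Der}_{\alpha_V}(V)$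 is the set of these. In characteristic 2, $B_V$ is called $\mathscr{D}$-invariant if $B_V(x,\mathscr{D}(x))=0$ for all $x\in V$. *)

(* Defs.v *)
From mathcomp Require Import all_boot all_algebra.
Set Implicit Arguments. Unset Strict Implicit. Unset Printing Implicit Defensive.
Import GRing.Theory.
Local Open Scope ring_scope.

Section HomLie.
Variables (F : fieldType) (W : lmodType F).

Definition bilinear_map (f : W -> W -> F) : Prop :=
  (forall (a : F) x y z, f (a *: x + y) z = a * f x z + f y z) /\
  (forall (a : F) x y z, f x (a *: y + z) = a * f x y + f x z).

Definition bilinear_bracket (br : W -> W -> W) : Prop :=
  (forall (a : F) x y z, br (a *: x + y) z = a *: br x z + br y z) /\
  (forall (a : F) x y z, br x (a *: y + z) = a *: br x y + br x z).

Definition linear_map (f : W -> W) : Prop :=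
  forall (a : F) x y, f (a *: x + y) = a *: f x + f y.

Definition is_HomLie (br : W -> W -> W) (al : W -> W) : Prop :=
  [/\ bilinear_bracket br, linear_map al,
      (forall x, br x x = 0) &
      (forall x y z, br (al x) (br y z) + br (al y) (br z x) + br (al z) (br x y) = 0)].

Definition hom_multiplicative (br : W -> W -> W) (al : W -> W) : Prop :=
  forall x y, al (br x y) = br (al x) (al y).

Definition involutive_map (al : W -> W) : Prop := forall x, al (al x) = x.

Definition symmetric_form (B : W -> W -> F) : Prop := forall x y, B x y = B y x.

Definition nondegenerate (B : W -> W -> F) : Prop :=
  forall x, (forall y, B x y = 0) -> x = 0.

Definition is_quadratic_HomLie (br : W -> W -> W) (al : W -> W) (B : W -> W -> F) : Prop :=
  is_HomLie br al /\ bilinear_map B /\ symmetric_form B /\ nondegenerate B /\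
  (forall x y z, B (br x y) z = B x (br y z)) /\
  (forall x y, B (al x) y = B x (al y)).

Definition is_alpha_derivation (br : W -> W -> W) (al : W -> W) (D : W -> W) : Prop :=
  [/\ linear_map D, (forall x, D (al x) = al (D x)) &
      (forall x y, D (br x y) = br (D x) (al y) + br (al x) (D y))].

(* characteristic-2 D-invariance of B *)
Definition D_invariant (B : W -> W -> F) (D : W -> W) : Prop := forall x, B x (D x) = 0.

End HomLie.

(* The extension L = F estar (+) V (+) F e, an element (a, x, b) standing for
   a estar + x + b e. *)
Section Extension.
Variables (F : fieldType) (V : lmodType F).
Definition Lext := (F^o * V * F^o)%type.

Definition mkL (a : F) (x : V) (b : F) : Lext := (a, x, b).

Variables (brV : V -> V -> V) (alV : V -> V) (BV : V -> V -> F) (D : V -> V)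
  (x0 : V) (lam lam0 beta : F).

(* [a estar + x + b e, c estar + y + d e]
     = [x,y]_V + B_V(D x, y) e + a D(y) + c D(x)  (e central, [estar,estar] = 0) *)
Definition ext_bracket (u v : Lext) : Lext :=
  let: (a, x, b) := u in let: (c, y, d) := v in
  mkL 0 (brV x y + a *: D y + c *: D x) (BV (D x) y).

Definition ext_alpha (u : Lext) : Lext :=
  let: (a, x, b) := u in
  mkL (a * lam) (alV x + a *: x0) (a * lam0 + BV x0 x + b * lam).

Definition ext_form (u v : Lext) : F :=
  let: (a, x, b) := u in let: (c, y, d) := v in
  BV x y + a * d + b * c + beta * (a * c).

End Extension.

(* Main.v *)
Require Import Defs.
From mathcomp Require Import all_boot all_algebra.
From mathcomp Require Import ring.
Import GRing.Theory.
Local Open Scope ring_scope.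
Set Implicit Arguments. Unset Strict Implicit.

Lemma linP (F : fieldType) (W X : lmodType F) (f : W -> X) :
  (forall (a : F) x y, f (a *: x + y) = a *: f x + f y) ->
  [/\ f 0 = 0, (forall x y, f (x + y) = f x + f y) & (forall a x, f (a *: x) = a *: f x)].
Proof.
move=> H.
have f0 : f 0 = 0.
  have := H 1 0 0; rewrite !scale1r addr0 => h.
  by apply: (addIr (f 0)); rewrite add0r -h.
split=> //.
- by move=> x y; have := H 1 x y; rewrite !scale1r.
- by move=> a x; rewrite -[a *: x]addr0 H f0 addr0.
Qed.

Lemma linPs (F : fieldType) (W : lmodType F) (f : W -> F) :
  (forall (a : F) x y, f (a *: x + y) = a * f x + f y) ->
  [/\ f 0 = 0, (forall x y, f (x + y) = f x + f y) & (forall a x, f (a *: x) = a * f x)].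
Proof. move=> H; exact: (@linP F W F^o f H). Qed.

Theorem theorem3p1 (F : closedFieldType) (V : vectType F)
    (brV : V -> V -> V) (alV : V -> V) (BV : V -> V -> F) (D : V -> V)
    (x0 : V) (lam lam0 beta : F) :
  2 \in [pchar F] ->
  is_quadratic_HomLie brV alV BV ->
  hom_multiplicative brV alV ->
  involutive_map alV ->
  is_alpha_derivation brV alV D ->
  D_invariant BV D ->
  (forall y, lam *: D y + brV x0 y = D y) ->
  alV (D x0) = D x0 ->
  (forall y, alV (D (D y)) + D (D (alV y)) = brV (D x0) y) ->
  let br := ext_bracket brV BV D in
  let al := ext_alpha alV BV x0 lam lam0 in
  let B := ext_form BV beta in
  [/\ is_quadratic_HomLie br al B /\ hom_multiplicative br al,
      bijective al <-> lam != 0 &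
      involutive_map al <-> [/\ lam ^+ 2 = 1, alV x0 = lam *: x0 & BV x0 x0 = 0]].
Proof.
move=> ch2 [[[brl brr] alL brxx jac] [[Bl Br] [Bsym [Bnd [Binv Bal]]]]] mult inv [DL Dal Dder] Dinv Hx0 HDx0 HD2 br al B.
have two0 : (2%:R : F) = 0 by exact: pcharf0 ch2.
have [D0 DD DZ] := linP DL.
have [al0 alD alZ] := linP alL.
have [br0l brDl brZl] : [/\ forall z, brV 0 z = 0, (forall x y z, brV (x + y) z = brV x z + brV y z) & (forall a x z, brV (a *: x) z = a *: brV x z)].
  by split=> [z|x y z|a x z]; have [] := linP (fun a x y => brl a x y z).
have [br0r brDr brZr] : [/\ forall z, brV z 0 = 0, (forall z x y, brV z (x + y) = brV z x + brV z y) & (forall a z x, brV z (a *: x) = a *: brV z x)].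
  by split=> [z|z x y|a z x]; have [] := linP (fun a x y => brr a z x y).
have [B0l BDl BZl] : [/\ forall z, BV 0 z = 0, (forall x y z, BV (x + y) z = BV x z + BV y z) & (forall a x z, BV (a *: x) z = a * BV x z)].
  by split=> [z|x y z|a x z]; have [] := linPs (fun a x y => Bl a x y z).
have [B0r BDr BZr] : [/\ forall z, BV z 0 = 0, (forall z x y, BV z (x + y) = BV z x + BV z y) & (forall a z x, BV z (a *: x) = a * BV z x)].
  by split=> [z|z x y|a z x]; have [] := linPs (fun a x y => Br a z x y).
have vv : forall v : V, v + v = 0 by move=> v; rewrite -mulr2n -scaler_nat two0 scale0r.
have ff : forall a : F, a + a = 0 by move=> a; rewrite -mulr2n -mulr_natr two0 mulr0.
have oppV : forall v : V, - v = v by move=> v; apply/eqP; rewrite eq_sym -addr_eq0 vv.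
have oppF : forall v : F, - v = v by move=> v; apply/eqP; rewrite eq_sym -addr_eq0 ff.
have brC : forall x y, brV x y = brV y x.
  move=> x y; have h := brxx (x+y); rewrite brDl !brDr !brxx add0r addr0 in h.
  by move/eqP: h; rewrite addr_eq0 oppV => /eqP.
have Bnd' : forall P Q : V, (forall t, BV P t = BV Q t) -> P = Q.
  move=> P Q H; apply/eqP; rewrite -subr_eq0; apply/eqP/Bnd=> t.
  by rewrite oppV BDl H ff.
have BDsym : forall x y, BV x (D y) = BV (D x) y.
  move=> x y; have h := Dinv (x + y); rewrite /D_invariant in h.
  rewrite DD !BDl !BDr Dinv Dinv add0r addr0 in h.
  by move/eqP: h; rewrite addr_eq0 oppF (Bsym y) => /eqP.
have brx0 : forall y, brV x0 y = (1 - lam) *: D y.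
  by move=> y; rewrite scalerBl scale1r -{1}(Hx0 y) [lam *: D y + _]addrC addrK.
have brDx0 : forall y, brV (D x0) y = 0.
  by move=> y; rewrite -HD2 !Dal vv.
have E := (alD, alZ, DD, DZ, brDl, brDr, brZl, brZr, BDl, BDr, BZl, BZr, al0, D0, br0l, br0r, B0l, B0r).
have E0 := (scale0r, scaler0, mul0r, mulr0, add0r, addr0, scalerA, scalerDl, scale1r, mul1r, mulr1).
have brx0r : forall y, brV y x0 = (1 - lam) *: D y by move=> y; rewrite brC brx0.
have R := (brx0r, Dal, inv, mult, HDx0, brx0, brDx0, Dder, BDsym).
have scR : forall k (a : F), k *: (a : F^o) = k * a by [].
have scL : forall k (p : F) (v : V) (q : F), k *: ((p, v, q) : Lext V) = (k * p, k *: v, k * q) by [].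
have adL : forall (p : F) (v : V) (q : F) p' v' q', ((p, v, q) : Lext V) + (p', v', q') = (p + p', v + v', q + q') by [].
have addE : forall v w : V, v + w = 0 -> v = w.
  by move=> v w /eqP; rewrite addr_eq0 oppV => /eqP.
have addEF : forall v w : F, v + w = 0 -> v = w.
  by move=> v w /eqP; rewrite addr_eq0 oppF => /eqP.
have jac' : forall x y z, brV (alV x) (brV y z) = brV (alV y) (brV z x) + brV (alV z) (brV x y).
  by move=> x y z; apply: addE; rewrite addrA jac.
have brDa : forall p q, brV (D p) (alV q) = brV (alV q) (D p) by move=> p q; exact: brC.
have R2 := (brDa, brxx).
have Tcyc : forall x y z, BV (alV (D x)) (brV y z) = BV (alV (D y)) (brV z x) + BV (alV (D z)) (brV x y).
  move=> x y z.
  rewrite -Dal -BDsym Dder BDr; congr (_ + _).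
    by rewrite -Binv -Bal mult inv Binv Bsym Binv.
  by rewrite -Binv -mult Bal Bsym.
have keyA : forall y z, BV (alV (D (D z))) y = BV (alV (D (D y))) z.
  by move=> y z; rewrite Bal Bsym BDsym BDsym !Dal.
have keyB : forall y z, BV (D x0) (brV y z) = 0 by move=> y z; rewrite -Binv brDx0 B0l.
have f1 : forall x y, BV x0 (brV x y) = (1 - lam) * BV (D x) y by move=> x y; rewrite -Binv brx0 BZl.
have f2 : forall x y, BV (alV (D x)) (alV y) = BV (D x) y by move=> x y; rewrite Bal inv.
have f3 : forall x, BV (alV (D x)) x0 = BV (D x0) x by move=> x; rewrite Bsym -Dal BDsym -Bal HDx0.
have f4 : forall y, BV (D x0) (alV y) = BV (D x0) y by move=> y; rewrite -Bal HDx0.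
have f5 : forall x, BV (D x) x = 0 by move=> x; rewrite -BDsym Dinv.
have mulRF : forall a b : F, (a : F^o) * (b : F^o) = (a * b : F) by [].
have unfold_al : forall a x b, al (a, x, b) = (a * lam, alV x + a *: x0, a * lam0 + BV x0 x + b * lam) by [].
split; last first.
- split.
    move=> H; have := H (1, 0, 0); rewrite /al /ext_alpha /mkL /= => -[h1 h2 h3].
    split.
    + by rewrite expr2 -[RHS]h1 mul1r.
    + by apply: addE; rewrite -[RHS]h2 al0 add0r !scale1r mul1r.
    + rewrite al0 add0r scale1r B0r in h3; rewrite -[RHS]h3; ring: two0.
  case=> hl hx hB [[a x] b]; rewrite /al /ext_alpha /mkL /=.
  congr (_, _, _).
  + by rewrite -mulrA -expr2 hl mulr1.
  + by rewrite alD alZ inv hx scalerA -addrA vv addr0.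
  + rewrite BDr BZr hB -Bal hx BZl (Bsym x0 x).
    have hl' : lam * lam = 1 by rewrite -expr2.
    rewrite [a * lam]mulRF [b * lam]mulRF [a * lam0]mulRF.
    transitivity (b * (lam * lam)); last by rewrite hl' mulr1.
    ring: two0.
- split.
    move=> Hb; apply/eqP => hl.
    have e : al (0, 0, 1) = al (0, 0, 0) by rewrite /al /ext_alpha /mkL /= hl !mulr0.
    have := bij_inj Hb e; case=> /eqP; by rewrite oner_eq0.
  move=> hl.
  exists (fun u => let: (p, q, r) := u in ((p / lam : F^o), alV (q + (p / lam) *: x0),
     ((r + (p / lam) * lam0 + BV x0 (alV (q + (p / lam) *: x0))) / lam : F^o))).
  + move=> [[a x] b]; rewrite /al /ext_alpha /mkL /=.
    rewrite [a * lam]mulRF mulfK // -addrA vv addr0 inv.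
    congr (_, _, _).
    have -> : a * lam0 + BV x0 x + b * lam + a * lam0 + BV x0 x = b * lam by ring: two0.
    by rewrite mulfK.
  + move=> [[p q] r]; rewrite /al /ext_alpha /mkL /= inv.
    rewrite [_ / lam * lam]mulRF divfK // -addrA vv addr0.
    congr (_, _, _).
    rewrite [_ / lam * lam]mulRF divfK //.
    ring: two0.
split; last first.
- move=> [[a x] b] [[c y] d]. rewrite /al /br /ext_alpha /ext_bracket /mkL /=.
  congr (_, _, _); first by rewrite mul0r.
    apply: Bnd' => t; rewrite ?E ?R2 ?R ?E ?R ?E ?R2 ?E0 ?scR /=. ring: two0.
  rewrite ?E ?R2 ?R ?E ?R ?E ?E0 f1 f2 f3 f4 f5; ring: two0.
split.
  split.
  - split=> k [[a x] b] [[c y] d] [[f z] g]; rewrite /br /ext_bracket /mkL /= scL adL;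
      (congr (_, _, _); first by rewrite mulr0 addr0);
      try (apply: Bnd' => t); rewrite ?E ?R ?E ?R ?E ?E0 ?scR; ring: two0.
  - move=> k [[a x] b] [[c y] d]; rewrite /al /ext_alpha /mkL /= scL adL;
      congr (_, _, _); try (apply: Bnd' => t); rewrite ?E ?R ?E ?R ?E ?E0 ?scR; ring: two0.
  - move=> [[a x] b]; rewrite /br /ext_bracket /mkL /= brxx add0r vv -BDsym Dinv //.
  - move=> [[a x] b] [[c y] d] [[f z] g]; rewrite /al /br /ext_alpha /ext_bracket /mkL /= !adL.
    apply: (@eq_trans _ _ ((0 : F^o), (0 : V), (0 : F^o))); last by [].
    congr (_, _, _); first by rewrite !addr0.
      apply: Bnd' => t; rewrite ?E jac' ?E ?R2 ?R ?E ?R ?E ?R2 ?E0 ?scR /=. rewrite [a * lam]mulRF [c * lam]mulRF [f * lam]mulRF. ring: two0.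
    rewrite /= ?E ?Dal Tcyc ?R2 ?R ?E ?R ?E ?E0 ?scR !keyB (keyA y z) (keyA x z) (keyA x y); ring: two0.
split.
  split=> k [[a x] b] [[c y] d] [[f z] g]; rewrite /B /ext_form /= ?E ?E0 ?scR; ring.
split.
  move=> [[a x] b] [[c y] d]; rewrite /B /ext_form /= Bsym; ring.
split.
  move=> [[a x] b] H.
  have hx : x = 0.
    apply: Bnd => y; have := H (0, y, 0); rewrite /B /ext_form /=.
    by rewrite !mulr0 !addr0.
  have ha : a = 0.
    have := H (0, 0, 1); rewrite /B /ext_form /= hx B0l => h; rewrite -[RHS]h; ring.
  have hb : b = 0.
    have := H (1, 0, 0); rewrite /B /ext_form /= hx ha B0l => h; rewrite -[RHS]h; ring.
  by rewrite hx ha hb.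
split.
  move=> [[a x] b] [[c y] d] [[f z] g]; rewrite /B /br /ext_form /ext_bracket /= ?E ?Binv ?BDsym ?E0 ?scR; ring.
move=> [[a x] b] [[c y] d]; rewrite /B /al /ext_form /ext_alpha /= ?E Bal (Bsym x x0); ring.
Qed.
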